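(* Let $\delta>2\epsilon>0$, $u=\frac1{\sqrt2}(-1,1)^\top$, $v=\frac1{\sqrt2}(1,1)^\top$, and let $Z_1,Z_2$ be i.i.d. Bernoulli$(1/2)$. Define $g_1=\frac\delta2u+\epsilon(2Z_1-1)v$, $g_2=\frac\delta2u+\epsilon(2Z_2-1)v$, $g_3=-\delta u$ in $\mathbb R^2$, all three clients honest. Then $\mathbb E\mu=\frac13(\mathbb Eg_1+\mathbb Eg_2+\mathbb Eg_3)=0$, $\mathbb E\|g_i-\mathbb Eg_i\|_2^2\le\epsilon^2$ and $\|\mathbb Eg_i-\mathbb E\mu\|_2\le\delta$ for $i=1,2,3$, and: (a) if $\hat\mu$ is the coordinate-wise median of $g_1,g_2,g_3$, then $\mathbb E\|\hat\mu-\mathbb E\mu\|_2^2>\frac{\delta^2}8+\frac{\epsilon^2}2$; (b) if $\hat\mu$ is the geometric median $\arg\min_x\sum_{i=1}^3\|x-g_i\|_2$, then $\mathbb E\|\hat\mu-\mathbb E\mu\|_2^2>\frac{\delta^2}8+\frac{\epsilon^2}2$; (c) if $\hat\mu$ is the Krum output, i.e. a $g_i$ minimizing $\min_{j\ne i}\|g_i-g_j\|_2^2$ (ties broken arbitrarily), then $\|\hat\mu-\mathbb E\mu\|_2^2=\epsilon^2+\frac{\delta^2}4$ always.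
   Context: This example has no Byzantine clients; it shows that these aggregation rules have gradient estimation error of order $\epsilon^2+\delta^2$ even without attack. *)

(* Defs.v *)
From HB Require Import structures.
From mathcomp Require Import all_boot all_order all_algebra.
Set Implicit Arguments. Unset Strict Implicit. Unset Printing Implicit Defensive.
Import Order.TTheory GRing.Theory Num.Theory.
Local Open Scope ring_scope.

Section Defs.
Variable R : rcfType.

Definition vec := (R * R)%type.
Definition vadd (x y : vec) : vec := (x.1 + y.1, x.2 + y.2).
Definition vsub (x y : vec) : vec := (x.1 - y.1, x.2 - y.2).
Definition vscale (a : R) (x : vec) : vec := (a * x.1, a * x.2).
Definition vzero : vec := (0, 0).
Definition vnorm2 (x : vec) : R := x.1 ^+ 2 + x.2 ^+ 2.
Definition vnorm (x : vec) : R := Num.sqrt (vnorm2 x).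

Definition uvec : vec := (- (1 / Num.sqrt 2), 1 / Num.sqrt 2).
Definition vvec : vec := (1 / Num.sqrt 2, 1 / Num.sqrt 2).

(* Outcome space of (Z1, Z2), i.i.d. Bernoulli(1/2): uniform on bool * bool,
   Z_k = 1 iff the k-th boolean is true. *)
Definition outcome := (bool * bool)%type.
Definition bern (b : bool) : R := (b : nat)%:R.

Definition Ex (f : outcome -> R) : R := (1 / 4) * \sum_(z : outcome) f z.
Definition Evec (f : outcome -> vec) : vec :=
  (Ex (fun z => (f z).1), Ex (fun z => (f z).2)).

Definition grad (eps delta : R) (z : outcome) (i : 'I_3) : vec :=
  match val i with
  | 0 => vadd (vscale (delta / 2) uvec) (vscale (eps * (2 * bern z.1 - 1)) vvec)
  | 1 => vadd (vscale (delta / 2) uvec) (vscale (eps * (2 * bern z.2 - 1)) vvec)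
  | _ => vscale (- delta) uvec
  end.

Definition g0 : 'I_3 := inord 0.
Definition g1 : 'I_3 := inord 1.
Definition g2 : 'I_3 := inord 2.

Definition muavg (eps delta : R) (z : outcome) : vec :=
  vscale (1 / 3) (vadd (grad eps delta z g0)
                       (vadd (grad eps delta z g1) (grad eps delta z g2))).

Definition med3 (a b c : R) : R :=
  Num.max (Num.min a b) (Num.min (Num.max a b) c).

Definition cwmed (eps delta : R) (z : outcome) : vec :=
  let g := grad eps delta z in
  (med3 (g g0).1 (g g1).1 (g g2).1, med3 (g g0).2 (g g1).2 (g g2).2).

Definition sumdist (eps delta : R) (z : outcome) (x : vec) : R :=
  \sum_(i < 3) vnorm (vsub x (grad eps delta z i)).

(* Krum score: min over j <> i of ||g_i - g_j||^2; the j <> i are lift i k, k : 'I_2 *)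
Definition krum_score (eps delta : R) (z : outcome) (i : 'I_3) : R :=
  let g := grad eps delta z in
  Num.min (vnorm2 (vsub (g i) (g (lift i (ord0 : 'I_2)))))
          (vnorm2 (vsub (g i) (g (lift i (ord_max : 'I_2))))).

End Defs.

(* Main.v *)
Require Import Defs.
From HB Require Import structures.
From mathcomp Require Import all_boot all_order all_algebra ring lra.
Import Order.TTheory GRing.Theory Num.Theory.
Local Open Scope ring_scope.
Lemma Ex_expand (R : rcfType) (f : outcome -> R) :
  Ex f = 1/4 * (f (true,true) + f (true,false) + f (false,true) + f (false,false)).
Proof.
rewrite /Ex; have := pair_bigA _ (fun a b : bool => f (a,b)).
have -> : (\sum_(z : outcome) f z) = \sum_(p : bool * bool) f (p.1, p.2) by apply: eq_bigr => -[].
move=> <-. rewrite !big_bool /=. congr (_ * _); ring.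
Qed.

Section H.
Variable R : rcfType.
Definition sq : R := 1 / Num.sqrt 2.
Definition comb (a b : R) : vec R := vadd (vscale a (uvec R)) (vscale b (vvec R)).

Lemma sq_gt0 : 0 < sq.
Proof. by rewrite /sq divr_gt0 // sqrtr_gt0 ltr0n. Qed.

Lemma sq2 : sq ^+ 2 = 1/2.
Proof. by rewrite /sq expr_div_n expr1n sqr_sqrtr // ler0n. Qed.

Lemma vnorm2_comb a b : vnorm2 (comb a b) = a ^+ 2 + b ^+ 2.
Proof.
rewrite /vnorm2 /comb /vadd /vscale /uvec /vvec /= -/sq.
have -> : (a * - sq + b * sq) ^+ 2 + (a * sq + b * sq) ^+ 2 = 2 * sq^+2 * (a^+2+b^+2) by ring.
by rewrite sq2; field.
Qed.

Lemma vsub_comb a b c d : vsub (comb a b) (comb c d) = comb (a - c) (b - d).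
Proof. rewrite /vsub /comb /vadd /vscale /uvec /vvec /=; congr pair; ring. Qed.

Lemma comb_surj (x : vec R) : exists p q, x = comb p q.
Proof.
case: x => x1 x2; exists (sq * (x2 - x1)), (sq * (x1 + x2)).
rewrite /comb /vadd /vscale /uvec /vvec /= -/sq.
have h := sq2; congr pair.
  have -> : sq * (x2 - x1) * - sq + sq * (x1 + x2) * sq = 2 * sq^+2 * x1 by ring.
  by rewrite h; field.
have -> : sq * (x2 - x1) * sq + sq * (x1 + x2) * sq = 2 * sq^+2 * x2 by ring.
by rewrite h; field.
Qed.

Lemma g0E : g0 = Ordinal (isT : (0 < 3)%N).
Proof. by apply: val_inj; rewrite /= inordK. Qed.
Lemma g1E : g1 = Ordinal (isT : (1 < 3)%N).
Proof. by apply: val_inj; rewrite /= inordK. Qed.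
Lemma g2E : g2 = Ordinal (isT : (2 < 3)%N).
Proof. by apply: val_inj; rewrite /= inordK. Qed.
Definition az (eps : R) (b : bool) : R := eps * (2 * bern R b - 1).

Lemma grad0 eps delta z : grad eps delta z g0 = comb (delta/2) (az eps z.1).
Proof. by rewrite g0E. Qed.
Lemma grad1 eps delta z : grad eps delta z g1 = comb (delta/2) (az eps z.2).
Proof. by rewrite g1E. Qed.
Lemma grad2 eps delta z : grad eps delta z g2 = comb (-delta) 0.
Proof. rewrite g2E /grad /= /comb /vadd /vscale /=; congr pair; ring. Qed.

Lemma azT eps : az eps true = eps.
Proof. rewrite /az /bern /=; ring. Qed.
Lemma azF eps : az eps false = - eps.
Proof. rewrite /az /bern /=; ring. Qed.

Lemma Evec_comb (f h : outcome -> R) :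
  Evec (fun z => comb (f z) (h z)) = comb (Ex f) (Ex h).
Proof.
rewrite /Evec !Ex_expand /comb /vadd /vscale /uvec /vvec /=; congr pair; ring.
Qed.

Lemma I3 (i : 'I_3) : i = g0 \/ i = g1 \/ i = g2.
Proof.
case: i => -[|[|[|//]]] hi; [left|right;left|right;right]; apply: val_inj => /=;
  by rewrite inordK.
Qed.


Lemma vnorm_comb a b : vnorm (comb a b) = Num.sqrt (a ^+ 2 + b ^+ 2).
Proof. by rewrite /vnorm vnorm2_comb. Qed.

Lemma comb00 : comb 0 0 = vzero R.
Proof. rewrite /comb /vadd /vscale /vzero /=; congr pair; ring. Qed.

Lemma sqrt_le (x y : R) : 0 <= y -> x <= y ^+ 2 -> Num.sqrt x <= y.
Proof.
move=> hy hx; rewrite -(ger0_norm hy) -sqrtr_sqr ler_sqrt //.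
exact: sqr_ge0.
Qed.

Lemma sqrt_facts (x : R) : 0 <= x -> 0 <= Num.sqrt x /\ Num.sqrt x ^+ 2 = x.
Proof. by move=> hx; split; [exact: sqrtr_ge0 | exact: sqr_sqrtr]. Qed.

Lemma tri (x1 x2 y1 y2 : R) :
  Num.sqrt ((x1 + y1) ^+ 2 + (x2 + y2) ^+ 2) <=
  Num.sqrt (x1 ^+ 2 + x2 ^+ 2) + Num.sqrt (y1 ^+ 2 + y2 ^+ 2).
Proof.
have [hX1 hX2] : 0 <= Num.sqrt (x1 ^+ 2 + x2 ^+ 2) /\
   Num.sqrt (x1 ^+ 2 + x2 ^+ 2) ^+ 2 = x1 ^+ 2 + x2 ^+ 2.
  by apply: sqrt_facts; nra.
have [hY1 hY2] : 0 <= Num.sqrt (y1 ^+ 2 + y2 ^+ 2) /\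
   Num.sqrt (y1 ^+ 2 + y2 ^+ 2) ^+ 2 = y1 ^+ 2 + y2 ^+ 2.
  by apply: sqrt_facts; nra.
set X := Num.sqrt (x1 ^+ 2 + x2 ^+ 2) in hX1 hX2 *.
set Y := Num.sqrt (y1 ^+ 2 + y2 ^+ 2) in hY1 hY2 *.
apply: sqrt_le; first nra.
have hXY : (X * Y) ^+ 2 >= (x1 * y1 + x2 * y2) ^+ 2.
  rewrite exprMn hX2 hY2; have := sqr_ge0 (x1 * y2 - x2 * y1); nra.
have hXY0 : 0 <= X * Y by nra.
have : x1 * y1 + x2 * y2 <= X * Y by nra.
nra.
Qed.

Definition sdist (x : vec R) (P Q S : vec R) :=
  vnorm (vsub x P) + vnorm (vsub x Q) + vnorm (vsub x S).

Lemma sumdistE eps delta z x :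
  sumdist eps delta z x =
  vnorm (vsub x (comb (delta/2) (az eps z.1))) +
  vnorm (vsub x (comb (delta/2) (az eps z.2))) +
  vnorm (vsub x (comb (-delta) 0)).
Proof.
rewrite -(grad0 eps delta z) -(grad1 eps delta z) -(grad2 eps delta z) /sumdist !big_ord_recr big_ord0 /=. rewrite add0r.
rewrite g0E g1E g2E; congr (_ + _ + _); congr (vnorm (vsub _ (grad _ _ _ _))); exact: val_inj.
Qed.

Lemma geo_eq (A B C D p q : R) :
  Num.sqrt ((p - A) ^+ 2 + (q - B) ^+ 2) + Num.sqrt ((p - A) ^+ 2 + (q - B) ^+ 2)
  + Num.sqrt ((p - C) ^+ 2 + (q - D) ^+ 2) <=
  Num.sqrt ((A - A) ^+ 2 + (B - B) ^+ 2) + Num.sqrt ((A - A) ^+ 2 + (B - B) ^+ 2)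
  + Num.sqrt ((A - C) ^+ 2 + (B - D) ^+ 2) -> p = A /\ q = B.
Proof.
rewrite !subrr expr0n /= addr0 sqrtr0 !add0r.
have := tri (A - p) (B - q) (p - C) (q - D).
have -> : A - p + (p - C) = A - C by ring.
have -> : B - q + (q - D) = B - D by ring.
have -> : (A - p) ^+ 2 + (B - q) ^+ 2 = (p - A) ^+ 2 + (q - B) ^+ 2 by ring.
have [h1 h2] : 0 <= Num.sqrt ((p - A) ^+ 2 + (q - B) ^+ 2) /\
   Num.sqrt ((p - A) ^+ 2 + (q - B) ^+ 2) ^+ 2 = (p - A) ^+ 2 + (q - B) ^+ 2.
  by apply: sqrt_facts; rewrite addr_ge0 // sqr_ge0.
set S := Num.sqrt ((p - A) ^+ 2 + (q - B) ^+ 2) in h1 h2 *.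
move=> ht hH.
have S0 : S = 0 by lra.
move: h2; rewrite S0 expr0n /= => h2.
have hp : (p - A) ^+ 2 = 0 by have := sqr_ge0 (p - A); have := sqr_ge0 (q - B); lra.
have hq : (q - B) ^+ 2 = 0 by have := sqr_ge0 (p - A); have := sqr_ge0 (q - B); lra.
move/eqP: hp; rewrite sqrf_eq0 subr_eq0 => /eqP ->.
by move/eqP: hq; rewrite sqrf_eq0 subr_eq0 => /eqP ->.
Qed.

Lemma geo_neq (d e a1 a2 p q : R) : 0 < e -> 2 * e < d ->
  a1 ^+ 2 = e ^+ 2 -> a2 ^+ 2 = e ^+ 2 ->
  Num.sqrt ((p - d / 2) ^+ 2 + (q - a1) ^+ 2) + Num.sqrt ((p - d / 2) ^+ 2 + (q - a2) ^+ 2)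
  + Num.sqrt ((p - - d) ^+ 2 + (q - 0) ^+ 2) <=
  Num.sqrt ((d / 4 - d / 2) ^+ 2 + (0 - a1) ^+ 2) + Num.sqrt ((d / 4 - d / 2) ^+ 2 + (0 - a2) ^+ 2)
  + Num.sqrt ((d / 4 - - d) ^+ 2 + (0 - 0) ^+ 2) -> 0 < p ^+ 2 + q ^+ 2.
Proof.
move=> he hd h1 h2 H.
rewrite lt_def; apply/andP; split; last nra.
apply/negP => /eqP hpq.
have hp : p = 0 by nra.
have hq : q = 0 by nra.
move: H; rewrite hp hq.
have -> : (0 - d / 2) ^+ 2 + (0 - a1) ^+ 2 = d ^+ 2 / 4 + e ^+ 2 by rewrite -h1; field.
have -> : (0 - d / 2) ^+ 2 + (0 - a2) ^+ 2 = d ^+ 2 / 4 + e ^+ 2 by rewrite -h2; field.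
have -> : (d / 4 - d / 2) ^+ 2 + (0 - a1) ^+ 2 = d ^+ 2 / 16 + e ^+ 2 by rewrite -h1; field.
have -> : (d / 4 - d / 2) ^+ 2 + (0 - a2) ^+ 2 = d ^+ 2 / 16 + e ^+ 2 by rewrite -h2; field.
have -> : (0 - - d) ^+ 2 + (0 - 0) ^+ 2 = d ^+ 2 by field.
have -> : (d / 4 - - d) ^+ 2 + (0 - 0) ^+ 2 = (5 * d / 4) ^+ 2 by field.
rewrite !sqrtr_sqr !ger0_norm; [|lra|lra].
have [hA1 hA2] : 0 <= Num.sqrt (d ^+ 2 / 4 + e ^+ 2) /\
   Num.sqrt (d ^+ 2 / 4 + e ^+ 2) ^+ 2 = d ^+ 2 / 4 + e ^+ 2.
  by apply: sqrt_facts; nra.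
have [hB1 hB2] : 0 <= Num.sqrt (d ^+ 2 / 16 + e ^+ 2) /\
   Num.sqrt (d ^+ 2 / 16 + e ^+ 2) ^+ 2 = d ^+ 2 / 16 + e ^+ 2.
  by apply: sqrt_facts; nra.
set A := Num.sqrt (d ^+ 2 / 4 + e ^+ 2) in hA1 hA2 *.
set B := Num.sqrt (d ^+ 2 / 16 + e ^+ 2) in hB1 hB2 *.
have hAl : A < 3 * d / 4 by nra.
have hBl : B < 3 * d / 5 by nra.
have hprod : (A - B) * (A + B) = 3 * d ^+ 2 / 16 by rewrite -[X in _ = X]/(3 * d ^+ 2 / 16); nra.
have hAB : (A - B - d / 8) * (A + B) > 0 by nra.
have : A - B - d / 8 > 0 by nra.
lra.
Qed.

Lemma Emu0 eps delta : Evec (muavg eps delta) = comb 0 0.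
Proof.
rewrite /Evec !Ex_expand /= /muavg !grad0 !grad1 !grad2 /= !azT !azF.
rewrite /comb /vadd /vscale /uvec /vvec /= -/sq; congr pair; by field.
Qed.

Lemma EG0 eps delta : Evec ((grad eps delta)^~ g0) = comb (delta / 2) 0.
Proof.
rewrite /Evec !Ex_expand /= !grad0 /= !azT !azF.
rewrite /comb /vadd /vscale /uvec /vvec /= -/sq; congr pair; by field.
Qed.
Lemma EG1 eps delta : Evec ((grad eps delta)^~ g1) = comb (delta / 2) 0.
Proof.
rewrite /Evec !Ex_expand /= !grad1 /= !azT !azF.
rewrite /comb /vadd /vscale /uvec /vvec /= -/sq; congr pair; by field.
Qed.
Lemma EG2 eps delta : Evec ((grad eps delta)^~ g2) = comb (- delta) 0.
Proof.
rewrite /Evec !Ex_expand /= !grad2 /=.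
rewrite /comb /vadd /vscale /uvec /vvec /= -/sq; congr pair; by field.
Qed.

Lemma med3_aa (a c : R) : med3 a a c = a.
Proof. by rewrite /med3 minxx maxxx max_l // ge_min lexx. Qed.
Lemma med3C (a b c : R) : med3 a b c = med3 b a c.
Proof. by rewrite /med3 minC [Num.max a b]maxC. Qed.
Lemma med3_mid (a b c : R) : b <= a -> a <= c -> med3 a b c = a.
Proof. by move=> h1 h2; rewrite /med3 (min_r h1) (max_l h1) (min_l h2) (max_r h1). Qed.
Lemma med3_mid2 (a b c : R) : c <= a -> a <= b -> med3 a b c = a.
Proof. by move=> h1 h2; rewrite /med3 (min_l h2) (max_r h2) (min_r (le_trans h1 h2)) (max_l h1). Qed.

Lemma lift20 : lift g2 (ord0 : 'I_2) = g0.
Proof. by apply: val_inj; rewrite g2E g0E. Qed.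
Lemma lift21 : lift g2 (ord_max : 'I_2) = g1.
Proof. by apply: val_inj; rewrite g2E g1E. Qed.
Lemma lift00 : lift g0 (ord0 : 'I_2) = g1.
Proof. by apply: val_inj; rewrite g0E g1E. Qed.


Lemma cwTT (eps delta : R) (he : 0 < eps) (hd : 2 * eps < delta) : cwmed eps delta (true,true) = comb (delta/2) eps.
Proof.
rewrite /cwmed /= grad0 grad1 grad2 /= azT !med3_aa.
by [].
Qed.
Lemma cwFF (eps delta : R) (he : 0 < eps) (hd : 2 * eps < delta) : cwmed eps delta (false,false) = comb (delta/2) (- eps).
Proof.
rewrite /cwmed /= grad0 grad1 grad2 /= azF !med3_aa.
by [].
Qed.
Lemma cwTF (eps delta : R) (he : 0 < eps) (hd : 2 * eps < delta) : cwmed eps delta (true,false) = comb (delta/2 - eps) 0.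
Proof.
have hs := sq_gt0.
have he2 : 0 < delta / 2 - eps by lra.
have hd0 : 0 < delta by lra.
have p1 := mulr_gt0 he hs; have p2 := mulr_gt0 he2 hs; have p3 := mulr_gt0 hd0 hs.
rewrite /cwmed /= grad0 grad1 grad2 /= azT azF /comb /vadd /vscale /uvec /vvec /= -/sq.
congr pair.
  rewrite med3_mid; [ring|nra|nra].
rewrite med3C med3_mid2; [ring|nra|nra].
Qed.
Lemma cwFT (eps delta : R) (he : 0 < eps) (hd : 2 * eps < delta) : cwmed eps delta (false,true) = comb (delta/2 - eps) 0.
Proof.
have hs := sq_gt0.
have he2 : 0 < delta / 2 - eps by lra.
have hd0 : 0 < delta by lra.
have p1 := mulr_gt0 he hs; have p2 := mulr_gt0 he2 hs; have p3 := mulr_gt0 hd0 hs.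
rewrite /cwmed /= grad0 grad1 grad2 /= azT azF /comb /vadd /vscale /uvec /vvec /= -/sq.
congr pair.
  rewrite med3C med3_mid; [ring|nra|nra].
rewrite med3_mid2; [ring|nra|nra].
Qed.

Lemma kr_bad (eps delta : R) (he : 0 < eps) (hd : 2 * eps < delta) z : krum_score eps delta z g0 < krum_score eps delta z g2.
Proof.
rewrite /krum_score lift20 lift21 lift00.
rewrite lt_min; apply/andP; split;
  (apply: (le_lt_trans (y := vnorm2 (vsub (grad eps delta z g0) (grad eps delta z g1))));
   [by rewrite ge_min lexx|]);
  rewrite grad0 grad1 grad2 !vsub_comb !vnorm2_comb;
  case: z => -[] -[]; rewrite /= ?azT ?azF; nra.
Qed.
End H.
Arguments comb {R}.
Arguments sq {R}.
Arguments cwTT {R eps delta}. Arguments cwTF {R eps delta}.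
Arguments cwFT {R eps delta}. Arguments cwFF {R eps delta}.
Arguments kr_bad {R eps delta}. Arguments comb_surj {R}. Arguments geo_neq {R d e a1 a2 p q}.

Theorem mainTheorem13 (R : rcfType) (eps delta : R) :
  0 < eps -> 2 * eps < delta ->
  let g := grad eps delta in
  let Emu := Evec (muavg eps delta) in
  [/\ Emu = vscale (1 / 3) (vadd (Evec (g^~ g0))
                              (vadd (Evec (g^~ g1)) (Evec (g^~ g2)))),
      Emu = vzero R,
      (forall i : 'I_3,
         Ex (fun z => vnorm2 (vsub (g z i) (Evec (g^~ i)))) <= eps ^+ 2)
    & (forall i : 'I_3, vnorm (vsub (Evec (g^~ i)) Emu) <= delta)] /\
  [/\
      (* (a) coordinate-wise median *)
      Ex (fun z => vnorm2 (vsub (cwmed eps delta z) Emu))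
        > delta ^+ 2 / 8 + eps ^+ 2 / 2,
      (* (b) geometric median: any minimizer of the sum of distances *)
      (forall gm : outcome -> vec R,
         (forall z x, sumdist eps delta z (gm z) <= sumdist eps delta z x) ->
         Ex (fun z => vnorm2 (vsub (gm z) Emu)) > delta ^+ 2 / 8 + eps ^+ 2 / 2)
    & (* (c) Krum: any score minimizer, for every outcome *)
      (forall (z : outcome) (i : 'I_3),
         (forall k : 'I_3, krum_score eps delta z i <= krum_score eps delta z k) ->
         vnorm2 (vsub (g z i) Emu) = eps ^+ 2 + delta ^+ 2 / 4)].
Proof.
move=> he hd g Emu.
have hEmu : Emu = comb 0 0 by rewrite /Emu Emu0.
split.
  split.
  - rewrite hEmu /g EG0 EG1 EG2 /comb /vadd /vscale /uvec /vvec /= -/sq.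
    congr pair; by field.
  - by rewrite hEmu comb00.
  - move=> i; case: (I3 i) => [->|[->|->]]; rewrite /g ?EG0 ?EG1 ?EG2 Ex_expand /=
      ?grad0 ?grad1 ?grad2 /= ?azT ?azF !vsub_comb !vnorm2_comb; nra.
  - move=> i; case: (I3 i) => [->|[->|->]]; rewrite /g ?EG0 ?EG1 ?EG2 hEmu
      vsub_comb vnorm_comb; apply: sqrt_le; nra.
split.
- rewrite hEmu Ex_expand /= (cwTT he hd) (cwTF he hd) (cwFT he hd) (cwFF he hd)
    !vsub_comb !vnorm2_comb.
  have : 0 < (delta / 2 - eps) ^+ 2 by rewrite exprn_gt0 // subr_gt0; lra.
  nra.
- move=> gm H; rewrite hEmu Ex_expand /=.
  case: (comb_surj (gm (true,true))) => p1 [q1 e1].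
  case: (comb_surj (gm (true,false))) => p2 [q2 e2].
  case: (comb_surj (gm (false,true))) => p3 [q3 e3].
  case: (comb_surj (gm (false,false))) => p4 [q4 e4].
  have := H (true,true) (comb (delta/2) eps).
  rewrite e1 !sumdistE /= azT !vsub_comb !vnorm_comb => /geo_eq [h1 h1'].
  have := H (false,false) (comb (delta/2) (- eps)).
  rewrite e4 !sumdistE /= azF !vsub_comb !vnorm_comb => /geo_eq [h4 h4'].
  have := H (true,false) (comb (delta/4) 0).
  rewrite e2 !sumdistE /= azT azF !vsub_comb !vnorm_comb
    => /(geo_neq he hd (erefl _) (sqrrN eps)) h2.
  have := H (false,true) (comb (delta/4) 0).
  rewrite e3 !sumdistE /= azT azF !vsub_comb !vnorm_comb
    => /(geo_neq he hd (sqrrN eps) (erefl _)) h3.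
  rewrite ?vsub_comb ?vnorm2_comb !subr0 h1 h1' h4 h4'.
  nra.
- move=> z i.
  case: (I3 i) => [->|[->|->]] H.
  + rewrite hEmu /g grad0 vsub_comb vnorm2_comb.
    case: z.1; rewrite ?azT ?azF; by field.
  + rewrite hEmu /g grad1 vsub_comb vnorm2_comb.
    case: z.2; rewrite ?azT ?azF; by field.
  + have h1 := H g0; have h2 := kr_bad he hd z.
    by move: (lt_le_trans h2 h1); rewrite ltxx.
Qed.
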